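(* Let $f:\mathbb{R}\to(0,\infty)$ be $C^4$, unimodal with maximum at $\mu$, of the form $f=e^{-H}$ with $H$ regularly varying (there is $\alpha>0$ with $H(tx)/H(t)\to x^\alpha$ as $|t|\to\infty$ for all $x>0$), and with $|(\log f)''''|<M$ for some $M>0$. Then for every $\beta>0$ and $\ell>0$, $$\ell^2\left[\tfrac12V(\beta)-I(\beta)+\tfrac{1}{4\beta}R(\beta)\right]=-\ell^2\,\mathrm{Var}_\beta\!\left(h(X)-\tfrac12k(X)\right).$$
   Context: $h=\log f$, $k(x)=(x-\mu)h'(x)$, $r(x)=(x-\mu)^2h''(x)$; $\mathbb{E}_\beta,\mathrm{Var}_\beta,\mathrm{Cov}_\beta$ are moments under $f^\beta/\int f^\beta$. $I(\beta)=\mathrm{Var}_\beta(h(X))$, $V(\beta)=\mathrm{Cov}_\beta(h(X),k(X))$, $R(\beta)=\mathbb{E}_\beta[r(X)-k(X)]$. *)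

(* Defs.v *)
From HB Require Import structures.
From mathcomp Require Import all_boot all_order all_algebra.
From mathcomp Require Import all_classical all_reals all_analysis.
Set Implicit Arguments. Unset Strict Implicit. Unset Printing Implicit Defensive.
Import Order.TTheory GRing.Theory Num.Theory.
Import numFieldNormedType.Exports.
Local Open Scope classical_set_scope.
Local Open Scope ring_scope.

Section Defs.
Variable R : realType.

Definition Cn (n : nat) (g : R -> R) : Prop :=
  (forall m : nat, (m < n)%N -> forall x : R, derivable (derive1n m g) x 1) /\
  continuous (derive1n n g).

Definition unimodal_at (g : R -> R) (mu : R) : Prop :=
  (forall x y, x <= y -> y <= mu -> g x <= g y) /\
  (forall x y, mu <= x -> x <= y -> g y <= g x).

Definition regularly_varying (H : R -> R) (alpha : R) : Prop :=
  forall x : R, 0 < x ->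
    ((fun t => H (t * x) / H t) @ +oo --> x `^ alpha) /\
    ((fun t => H (t * x) / H t) @ -oo --> x `^ alpha).

Definition Zb (f : R -> R) (beta : R) : R :=
  Rintegral lebesgue_measure setT (fun x => f x `^ beta).

Definition Eb (f : R -> R) (beta : R) (g : R -> R) : R :=
  Rintegral lebesgue_measure setT (fun x => g x * f x `^ beta) / Zb f beta.

Definition Covb (f : R -> R) (beta : R) (g1 g2 : R -> R) : R :=
  Eb f beta (fun x => (g1 x - Eb f beta g1) * (g2 x - Eb f beta g2)).

Definition Varb (f : R -> R) (beta : R) (g : R -> R) : R := Covb f beta g g.

Definition hfun (f : R -> R) : R -> R := fun x => ln (f x).
Definition kfun (f : R -> R) (mu : R) : R -> R :=
  fun x => (x - mu) * derive1 (hfun f) x.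
Definition rfun (f : R -> R) (mu : R) : R -> R :=
  fun x => (x - mu) ^+ 2 * derive1n 2 (hfun f) x.

Definition Ifun (f : R -> R) (beta : R) : R := Varb f beta (hfun f).
Definition Vfun (f : R -> R) (mu beta : R) : R := Covb f beta (hfun f) (kfun f mu).
Definition Rfun (f : R -> R) (mu beta : R) : R :=
  Eb f beta (fun x => rfun f mu x - kfun f mu x).

End Defs.

(* Main.v *)
Require Import Defs.
From HB Require Import structures.
From mathcomp Require Import all_boot all_order all_algebra.
From mathcomp Require Import all_classical all_reals all_analysis.
From mathcomp Require Import ring lra measurable_realfun.
Import Order.TTheory GRing.Theory Num.Theory.
Import numFieldNormedType.Exports.
Local Open Scope ring_scope.

Section Smooth.
Local Open Scope classical_set_scope.
Local Open Scope ring_scope.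
Set Implicit Arguments. Unset Strict Implicit.
Variable R : realType.
Implicit Types g : R -> R.

Lemma derive1nS m (g : R -> R) : derive1n m.+1 g = derive1n m (derive1 g).
Proof. rewrite /derive1n; exact: iterSr. Qed.

Definition Sm (n : nat) g := forall m, (m < n)%N -> forall x, derivable (derive1n m g) x 1.

Lemma Sm_succ n g : Sm n.+1 g <-> (forall x, derivable g x 1) /\ Sm n (derive1 g).
Proof.
split.
- move=> H; split; first by move=> x; exact: (H 0%N).
  by move=> m mn x; rewrite -derive1nS; apply: H.
- move=> [H0 H] [|m] mn x; first exact: H0.
  by rewrite derive1nS; exact: H.
Qed.

Lemma Sm_weak n g : Sm n.+1 g -> Sm n g.
Proof. by move=> H m mn; apply: H; exact: ltnW. Qed.

Lemma Sm_ext n g1 g2 : g1 =1 g2 -> Sm n g1 -> Sm n g2.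
Proof. by move=> e; have -> : g2 = g1 by apply/funext => x; rewrite e. Qed.

Lemma derive1_is g (x d : R) : is_derive x (1:R) g d -> derive1 g x = d.
Proof. by move=> H; rewrite derive1E derive_val. Qed.

Lemma Sm_cst n c : Sm n (fun _ => c).
Proof.
elim: n c => [c m //|n IH c]; apply/Sm_succ; split => [x|]; first exact: derivable_cst.
apply: (@Sm_ext _ (fun _ => 0)) => [x|//]; symmetry; apply: derive1_is.
Qed.

Lemma Sm_add n g1 g2 : Sm n g1 -> Sm n g2 -> Sm n (fun x => g1 x + g2 x).
Proof.
elim: n g1 g2 => [g1 g2 _ _ m //|n IH g1 g2 /Sm_succ[d1 s1] /Sm_succ[d2 s2]].
apply/Sm_succ; split => [x|].
  exact: derivableD.
apply: Sm_ext (IH _ _ s1 s2) => x; symmetry; apply: derive1_is.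
apply: is_deriveD; rewrite derive1E; exact: derivableP.
Qed.

Lemma Sm_opp n g : Sm n g -> Sm n (fun x => - g x).
Proof.
elim: n g => [g _ m //|n IH g /Sm_succ[d1 s1]].
apply/Sm_succ; split => [x|].
  exact: derivableN.
apply: Sm_ext (IH _ s1) => x; symmetry; apply: derive1_is.
apply: is_deriveN; rewrite derive1E; exact: derivableP.
Qed.

Lemma Sm_mul n g1 g2 : Sm n g1 -> Sm n g2 -> Sm n (fun x => g1 x * g2 x).
Proof.
elim: n g1 g2 => [g1 g2 _ _ m //|n IH g1 g2 S1 S2].
have /Sm_succ[d1 s1] := S1; have /Sm_succ[d2 s2] := S2.
apply/Sm_succ; split => [x|].
  exact: derivableM.
have := Sm_add (IH _ _ s1 (Sm_weak S2)) (IH _ _ (Sm_weak S1) s2).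
apply: Sm_ext => x; symmetry; apply: derive1_is.
apply: is_derive_eq; first by apply: is_deriveM; apply: derivableP.
rewrite !derive1E /GRing.scale /=; ring.
Qed.

Lemma Sm_inv n g : (forall x, g x != 0) -> Sm n g -> Sm n (fun x => (g x)^-1).
Proof.
move=> g0; elim: n g g0 => [g _ _ m //|n IH g g0 S1].
have /Sm_succ[d1 s1] := S1.
apply/Sm_succ; split => [x|].
  exact: derivableV.
have := Sm_mul (Sm_opp s1) (Sm_mul (IH _ g0 (Sm_weak S1)) (IH _ g0 (Sm_weak S1))).
apply: Sm_ext => x; symmetry; apply: derive1_is.
apply: is_derive_eq; first by apply: is_deriveV => //; apply: derivableP.
rewrite derive1E /GRing.scale /= expr2 invfM; ring.
Qed.

Lemma Sm_ln n g : (forall x, 0 < g x) -> Sm n g -> Sm n (fun x => ln (g x)).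
Proof.
move=> g0; case: n => [_ m //|n S1].
have /Sm_succ[d1 s1] := S1.
have D (x : R) : is_derive x (1:R) (fun x => ln (g x)) (derive1 g x * (g x)^-1).
  have H := @is_derive1_comp R (@ln R) g x _ _ (is_derive1_ln (g0 x)) (derivableP (d1 x)).
  by rewrite derive1E mulrC; exact: H.
apply/Sm_succ; split => [x|].
  by have [] := D x.
have := Sm_mul s1 (Sm_inv (fun x => lt0r_neq0 (g0 x)) (Sm_weak S1)).
apply: Sm_ext => x; symmetry; exact: derive1_is.
Qed.

Lemma Sm_id n : Sm n (fun x => x).
Proof.
case: n => [m //|n]; apply/Sm_succ; split => [x|].
  exact: derivable_id.
apply: (@Sm_ext _ (fun _ => 1)); last exact: Sm_cst.
by move=> x; symmetry; apply: derive1_is; exact: is_derive_id.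
Qed.

Lemma Sm_exp n g : Sm n g -> Sm n (fun x => expR (g x)).
Proof.
elim: n g => [g _ m //|n IH g S1].
have /Sm_succ[d1 s1] := S1.
have D (x : R) : is_derive x (1:R) (fun x => expR (g x)) (derive1 g x * expR (g x)).
  have H := @is_derive1_comp R (@expR R) g x _ _ (is_derive_expR (g x)) (derivableP (d1 x)).
  by rewrite derive1E mulrC; exact: H.
apply/Sm_succ; split => [x|].
  by have [] := D x.
have := Sm_mul s1 (IH _ (Sm_weak S1)).
apply: Sm_ext => x; symmetry; exact: derive1_is.
Qed.

Lemma Sm_cont g : Sm 1 g -> continuous g.
Proof.
move=> S x; apply: differentiable_continuous; apply/derivable1_diffP.
exact: (S 0%N).
Qed.

End Smooth.


Section Tail.
Local Open Scope classical_set_scope.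
Local Open Scope ring_scope.
Variable R : realType.
Set Implicit Arguments. Unset Strict Implicit.

Lemma powmono (n : nat) (x y : R) : 0 <= x -> x <= y -> x ^+ n <= y ^+ n.
Proof. by move=> x0 xy; apply: lerXn2r => //; rewrite nnegrE // (le_trans x0). Qed.

Lemma bernoulli (rho : R) (k : nat) : 1 <= rho -> 1 + k%:R * (rho - 1) <= rho ^+ k.
Proof.
move=> r1; elim: k => [|k IH]; first by rewrite mul0r addr0 expr0.
rewrite exprS -natr1.
have k0 : 0 <= k%:R * (rho - 1) ^+ 2 :> R by rewrite mulr_ge0 // sqr_ge0.
have h1 : (rho - 1) * (1 + k%:R * (rho - 1)) <= (rho - 1) * rho ^+ k.
  by apply: ler_wpM2l => //; lra.
nra.
Qed.

Lemma tail (G : R -> R) (a G0 rho beta : R) (n : nat) :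
  1 < rho -> 0 < beta ->
  (forall x y, a <= x -> x <= y -> G x <= G y) ->
  (forall x, G0 <= G x) ->
  (exists T1, forall t, T1 < t -> rho < G (t * 2) / G t) ->
  exists K, exists T, 0 < T /\
    forall x, T <= x -> (1 + x ^+ 2) ^+ n * expR (- (beta * G x)) <= K.
Proof.
move=> r1 b0 mono lb [T1 HT1].
pose T2 := Num.max (Num.max T1 a) 1.
have T2a : a <= T2 by rewrite /T2 !le_max lexx orbT.
have T21 : 1 <= T2 by rewrite /T2 le_max lexx orbT.
have T2T1 : T1 <= T2 by rewrite /T2 !le_max lexx.
have pos t : T2 < t -> 0 < G t.
  move=> tT2.
  have r := HT1 t (le_lt_trans T2T1 tT2).
  have [//|Gle] := ltP 0 (G t).
  move: Gle; rewrite le_eqVlt => /orP[/eqP G0'|Gn].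
    by move: r; rewrite G0' invr0 mulr0; lra.
  have m2 : G t <= G (t * 2) by apply: mono; [lra | nra].
  have q0le : G (t * 2) / G t <= 1 by rewrite ler_ndivrMr // mul1r.
  by move: r q0le r1; lra.
have ratio s : T2 < s -> rho * G s <= G (s * 2).
  move=> sT2; have r := HT1 s (le_lt_trans T2T1 sT2).
  by apply: ltW; rewrite -ltr_pdivlMr // pos.
pose s0 := T2 + 1.
have s0T2 : T2 < s0 by rewrite /s0; lra.
have Gs0 := pos _ s0T2.
have it k : rho ^+ k * G s0 <= G (s0 * 2 ^+ k).
  elim: k => [|k IH]; first by rewrite !expr0 mul1r mulr1.
  have sk : T2 < s0 * 2 ^+ k.
    have : 1 <= (2:R) ^+ k by apply: exprn_ege1; lra.
    nra.
  have -> : s0 * 2 ^+ k.+1 = s0 * 2 ^+ k * 2 by rewrite exprS; ring.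
  apply: le_trans (ratio _ sk).
  rewrite exprS -mulrA; apply: ler_wpM2l; [lra | exact: IH].
pose L := 4 ^+ n / (beta * (rho - 1)).
have L0 : 0 < L by rewrite /L divr_gt0 ?exprn_gt0 ?mulr_gt0 //; lra.
pose arg := L / (G s0 * (rho - 1)).
have arg0 : 0 <= arg by rewrite /arg ltW // divr_gt0 // mulr_gt0 //; lra.
pose k := Num.bound arg.
have kb : arg < k%:R by exact: archi_boundP.
pose T := s0 * 2 ^+ k.
have T0 : 0 < T by rewrite /T mulr_gt0 ?exprn_gt0 //; lra.
have Ts0 : s0 <= T.
  have : 1 <= (2:R) ^+ k by apply: exprn_ege1; lra.
  rewrite /T; nra.
have GT : L <= G T.
  apply: le_trans (it k).
  have b : 1 + k%:R * (rho - 1) <= rho ^+ k by exact: bernoulli (ltW r1).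
  have e1 : arg * (G s0 * (rho - 1)) = L by rewrite /arg divfK // mulf_neq0 // ?gt_eqF //; lra.
  have : arg * (G s0 * (rho - 1)) <= k%:R * (G s0 * (rho - 1)).
    by apply: ler_wpM2r; [rewrite mulr_ge0 //; lra | exact: ltW].
  have : (1 + k%:R * (rho - 1)) * G s0 <= rho ^+ k * G s0 by apply: ler_wpM2r => //; exact: ltW.
  nra.
have GL s : T <= s -> L <= G s.
  by move=> sT; apply: le_trans GT _; apply: mono => //; lra.
pose K0 := (1 + (2 * T) ^+ 2) ^+ n * expR (- (beta * G0)).
exists K0, T; split => //.
have small t : T <= t -> t <= 2 * T -> (1 + t ^+ 2) ^+ n * expR (- (beta * G t)) <= K0.
  move=> Tt t2T; apply: ler_pM.
  - by rewrite exprn_ge0 // addr_ge0 // sqr_ge0.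
  - exact: expR_ge0.
  - apply: powmono; first by rewrite addr_ge0 // sqr_ge0.
    by rewrite lerD2l; nra.
  - by rewrite ler_expR lerN2; apply: ler_wpM2l; [exact: ltW | exact: lb].
have step t : 2 * T <= t -> (1 + t ^+ 2) ^+ n * expR (- (beta * G t)) <=
    (1 + (t / 2) ^+ 2) ^+ n * expR (- (beta * G (t / 2))).
  move=> tT; set s := t / 2.
  have ts : t = s * 2 by rewrite /s divfK.
  have sT : T <= s by rewrite /s ler_pdivlMr //; lra.
  have GsL := GL _ sT.
  have rs := ratio s (lt_le_trans s0T2 (le_trans Ts0 sT)).
  have p1 : (1 + t ^+ 2) ^+ n <= 4 ^+ n * (1 + s ^+ 2) ^+ n.
    rewrite -exprMn; apply: powmono; first by rewrite addr_ge0 // sqr_ge0.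
    rewrite ts; nra.
  have p2 : expR (- (beta * G t)) <= expR (- (beta * G s)) * expR (- (beta * (rho - 1) * G s)).
    rewrite -expRD ler_expR ts.
    have : beta * (rho * G s) <= beta * G (s * 2) by apply: ler_wpM2l => //; exact: ltW.
    lra.
  have p3 : 4 ^+ n * expR (- (beta * (rho - 1) * G s)) <= 1.
    rewrite expRN ler_pdivrMr ?expR_gt0 // mul1r.
    apply: le_trans (expR_ge1Dx _).
    have e1 : beta * (rho - 1) * L = 4 ^+ n by rewrite /L mulrC divfK // mulf_neq0 // gt_eqF //; lra.
    have : beta * (rho - 1) * L <= beta * (rho - 1) * G s.
      by apply: ler_wpM2l => //; rewrite mulr_ge0 //; lra.
    lra.
  have q0 : 0 <= (1 + s ^+ 2) ^+ n * expR (- (beta * G s)).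
    by rewrite mulr_ge0 ?expR_ge0 // exprn_ge0 // addr_ge0 // sqr_ge0.
  have e0 : 0 <= expR (- (beta * G t)) by exact: expR_ge0.
  have e2 : 0 <= expR (- (beta * (rho - 1) * G s)) by exact: expR_ge0.
  have e3 : 0 <= (1 + s ^+ 2) ^+ n by rewrite exprn_ge0 // addr_ge0 // sqr_ge0.
  apply: le_trans (ler_pM _ _ p1 p2) _.
  - by rewrite exprn_ge0 // addr_ge0 // sqr_ge0.
  - exact: e0.
  have -> : 4 ^+ n * (1 + s ^+ 2) ^+ n * (expR (- (beta * G s)) * expR (- (beta * (rho - 1) * G s))) = ((1 + s ^+ 2) ^+ n * expR (- (beta * G s))) * (4 ^+ n * expR (- (beta * (rho - 1) * G s))) by ring.
  exact: ler_piMr.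
have ind m t : T <= t -> t <= T * 2 ^+ m -> (1 + t ^+ 2) ^+ n * expR (- (beta * G t)) <= K0.
  elim: m t => [|m IH] t Tt tm.
    by apply: small => //; move: tm; rewrite expr0 mulr1; lra.
  have [t2T|t2T] := lerP t (2 * T); first exact: small.
  apply: le_trans (step _ (ltW t2T)) _.
  apply: IH; first by rewrite ler_pdivlMr //; lra.
  by rewrite ler_pdivrMr // -mulrA -exprSr.
move=> x Tx.
apply: (ind (Num.bound (x / T))) => //.
have := upper_nthrootP (leqnn (Num.bound (x / T))).
by rewrite ltr_pdivrMr // mulrC => /ltW.
Qed.
End Tail.


Section Integ.
Local Open Scope classical_set_scope.
Local Open Scope ring_scope.
Variable R : realType.
Set Implicit Arguments. Unset Strict Implicit.
Local Notation mu := (@lebesgue_measure R).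

Definition qf (x : R) := (1 + x ^+ 2)^-1.

Lemma qf_gt0 x : 0 < qf x.
Proof. by rewrite /qf invr_gt0 ltr_wpDr // sqr_ge0. Qed.

Lemma Sm_qf n : Sm n qf.
Proof.
apply: Sm_inv => [x|]; first by rewrite gt_eqF // ltr_wpDr // sqr_ge0.
apply: Sm_add; first exact: Sm_cst.
apply: (@Sm_ext _ _ (fun x => x * x)) => [x|]; first by rewrite expr2.
by apply: Sm_mul; exact: Sm_id.
Qed.

Lemma intq : mu.-integrable setT (EFin \o qf).
Proof.
have cq : continuous qf by apply: Sm_cont; exact: Sm_qf.
apply/integrableP; split.
  by apply/measurable_EFinP; exact: continuous_measurable_fun.
under eq_integral do rewrite /= ger0_norm ?ltW ?qf_gt0 //.
rewrite ge0_symfun_integralT //; last 2 first.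
- by move=> x; exact/ltW/qf_gt0.
- by move=> x; rewrite /qf /= sqrrN.
rewrite -set_itvcy.
rewrite (@ge0_continuous_FTC2y R qf atan 0 (pi / 2)) //.
- by rewrite -EFinB -EFinM ltry.
- by move=> x _; exact/ltW/qf_gt0.
- exact: continuous_subspaceT.
- exact: cvgy_atan.
- by apply: cvg_at_right_filter; exact: continuous_atan.
- by move=> x _; rewrite derive1_atan.
Qed.

Lemma ibp0 (G g : R -> R) (K : R) :
  (forall x, is_derive x (1:R) G (g x)) -> continuous g ->
  mu.-integrable setT (EFin \o g) ->
  (forall x, `|G x| <= K * qf x) ->
  \int[mu]_x g x = 0.
Proof.
move=> dG cg ig GK.
pose N (n : nat) : R := n.+1%:R.
pose fn n := (EFin \o g) \_ `[- N n, N n].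
have mg : measurable_fun setT g by exact: continuous_measurable_fun.
have mfn n : measurable_fun setT (fn n).
  rewrite /fn; apply/(measurable_restrictT _ _).1 => //.
  by apply/measurable_EFinP; exact: measurable_funTS.
have mEg : measurable_fun setT (EFin \o g) by apply/measurable_EFinP.
have ffn : {ae mu, forall x, setT x -> fn ^~ x @ \oo --> (EFin \o g) x}.
  apply: aeW => x _; apply: cvg_near_cst.
  exists (Num.bound `|x|) => // n /= hn.
  rewrite /fn patchE mem_set //= in_itv /= -ler_norml.
  apply: ltW; apply: lt_le_trans (archi_boundP (normr_ge0 x)) _.
  by rewrite /N ler_nat; apply: leq_trans hn _.
have fng : {ae mu, forall x n, setT x -> (`|fn n x| <= (EFin \o (Num.norm \o g)) x)%E}.
  apply: aeW => x n _; rewrite /fn patchE; case: ifP => _ //.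
  by rewrite abse0 lee_fin normr_ge0.
have [_ _ DC] := @dominated_convergence _ _ _ mu setT measurableT fn (EFin \o g)
  (EFin \o (Num.norm \o g)) mfn mEg ffn (integrable_norm ig) fng.
have contG : continuous G.
  move=> x; apply: differentiable_continuous; apply/derivable1_diffP.
  by have [] := dG x.
pose v n := G (N n) - G (- N n).
have E n : (\int[mu]_x fn n x = (v n)%:E)%E.
  rewrite /fn -integral_mkcond /v.
  have N0 : 0 < N n by [].
  apply: continuous_FTC2; first by lra.
  - exact: continuous_subspaceT.
  - split.
    + by move=> x _; have [] := dG x.
    + exact/cvg_at_right_filter/contG.
    + exact/cvg_at_left_filter/contG.
  - by move=> x _; rewrite derive1E; have [_ ->] := dG x.
have vK n : `|v n| <= 2 * `|K| * harmonic n.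
  rewrite /v /=.
  have q1 : qf (- N n) = qf (N n) by rewrite /qf sqrrN.
  have N1 : 1 <= N n by rewrite /N ler1n.
  have q2 : qf (N n) <= (N n)^-1.
    rewrite /qf lef_pV2 ?posrE ?ltr_wpDr ?sqr_ge0 //; try nra; try lra.
  have a1 := GK (N n); have a2 := GK (- N n); rewrite q1 in a2.
  have a3 : K * qf (N n) <= `|K| * qf (N n) by apply: ler_wpM2r; [exact/ltW/qf_gt0 | exact: ler_norm].
  have a4 : `|K| * qf (N n) <= `|K| * (N n)^-1 by apply: ler_wpM2l.
  apply: le_trans (ler_normB _ _) _.
  rewrite /N -mulrA in a1 a2 a3 a4 *.
  move: a1 a2 a3 a4; set X1 := `|G _|; set X2 := `|G _|; set X3 := K * _; set X4 := `|K| * _; set X5 := `|K| / _. lra.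
have v0 : v @ \oo --> 0.
  apply: (@squeeze_cvgr _ _ _ _ (fun n => - (2 * `|K| * harmonic n)) (fun n => 2 * `|K| * harmonic n)).
  - by apply: nearW => n; rewrite -ler_norml.
  - rewrite -oppr0; apply: cvgN; rewrite -(mulr0 (2 * `|K|)); apply: cvgMr; exact: cvg_harmonic.
  - rewrite -(mulr0 (2 * `|K|)); apply: cvgMr; exact: cvg_harmonic.
have Ev0 : (EFin \o v) @ \oo --> 0%:E.
  by apply: cvg_EFin; [exact: nearW | exact: v0].
have Evi : (EFin \o v) @ \oo --> (\int[mu]_(x in setT) (EFin \o g) x)%E.
  have -> : EFin \o v = (fun n => \int[mu]_x fn n x)%E by apply/funext => n; rewrite /= E.
  exact: DC.
have := cvg_unique _ Ev0 Evi.
by rewrite /Rintegral => <-.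
Qed.

End Integ.


Section PB.
Local Open Scope classical_set_scope.
Local Open Scope ring_scope.
Variable R : realType.
Set Implicit Arguments. Unset Strict Implicit.
Implicit Types g : R -> R.

Lemma sqr_normr (x : R) : `|x| ^+ 2 = x ^+ 2.
Proof. exact: real_normK (num_real x). Qed.

Definition PP (x : R) := 1 + x ^+ 2.
Lemma PP_ge1 x : 1 <= PP x. Proof. by rewrite /PP lerDl sqr_ge0. Qed.
Lemma PP_gt0 x : 0 < PP x. Proof. by apply: lt_le_trans (PP_ge1 x). Qed.
Lemma PPX_ge1 x n : 1 <= PP x ^+ n. Proof. exact/exprn_ege1/PP_ge1. Qed.
Lemma PPX_ge0 x n : 0 <= PP x ^+ n. Proof. exact: le_trans (PPX_ge1 x n). Qed.
Lemma PP_up x n m : PP x ^+ n <= PP x ^+ (n + m).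
Proof. by rewrite exprD ler_peMr ?PPX_ge0 ?PPX_ge1. Qed.
Lemma PP_up' x n m : PP x ^+ m <= PP x ^+ (n + m).
Proof. by rewrite addnC PP_up. Qed.
Lemma norm_le_PP x : `|x| <= PP x.
Proof. rewrite /PP -[x ^+ 2]sqr_normr; have := normr_ge0 x; nra. Qed.

Definition pb g := exists C n, forall x, `|g x| <= C * PP x ^+ n.

Lemma pb_norm g : pb g -> exists C n, 0 <= C /\ forall x, `|g x| <= C * PP x ^+ n.
Proof.
move=> [C [n H]]; exists `|C|, n; split => // x; apply: le_trans (H x) _.
by apply: ler_wpM2r; [exact: PPX_ge0 | exact: ler_norm].
Qed.

Lemma pb_ext g1 g2 : g1 =1 g2 -> pb g1 -> pb g2.
Proof. by move=> e [C [n H]]; exists C, n => x; rewrite -e. Qed.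

Lemma pb_cst c : pb (fun _ => c).
Proof. by exists `|c|, 0%N => x; rewrite expr0 mulr1. Qed.

Lemma pb_lin c : pb (fun x => x - c).
Proof.
exists (1 + `|c|), 1%N => x; rewrite expr1.
apply: le_trans (ler_normB _ _) _.
have := norm_le_PP x; have := PP_ge1 x; have := normr_ge0 c; nra.
Qed.

Lemma pb_add g1 g2 : pb g1 -> pb g2 -> pb (fun x => g1 x + g2 x).
Proof.
move=> /pb_norm[C1 [n1 [C10 H1]]] /pb_norm[C2 [n2 [C20 H2]]].
exists (C1 + C2), (n1 + n2)%N => x; apply: le_trans (ler_normD _ _) _.
have a1 := PP_up x n1 n2; have a2 := PP_up' x n1 n2.
have b1 : C1 * PP x ^+ n1 <= C1 * PP x ^+ (n1 + n2) by apply: ler_wpM2l.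
have b2 : C2 * PP x ^+ n2 <= C2 * PP x ^+ (n1 + n2) by apply: ler_wpM2l.
have := H1 x; have := H2 x; lra.
Qed.

Lemma pb_mul g1 g2 : pb g1 -> pb g2 -> pb (fun x => g1 x * g2 x).
Proof.
move=> /pb_norm[C1 [n1 [C10 H1]]] /pb_norm[C2 [n2 [C20 H2]]].
exists (C1 * C2), (n1 + n2)%N => x; rewrite normrM exprD.
rewrite [_ * (_ * _)]mulrACA; apply: ler_pM => //; exact: normr_ge0.
Qed.

Lemma mvt0 g dg x : (forall y, is_derive y (1:R) g (dg y)) ->
  exists c, `|c| <= `|x| /\ g x - g 0 = dg c * x.
Proof.
move=> D.
have cg : continuous g.
  by move=> y; apply: differentiable_continuous; apply/derivable1_diffP; have [] := D y.
have [x0|x0] := lerP 0 x.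
  have cw : {within `[0, x], continuous g} by exact: continuous_subspaceT.
  have [c] := @MVT_segment R g dg 0 x x0 (fun y _ => D y) cw.
  rewrite in_itv /= => /andP[c0 cx] E; exists c; split; last by rewrite E subr0.
  by rewrite !ger0_norm // (le_trans c0).
have cw : {within `[x, 0], continuous g} by exact: continuous_subspaceT.
have [c] := @MVT_segment R g dg x 0 (ltW x0) (fun y _ => D y) cw.
rewrite in_itv /= => /andP[xc c0] E; exists c; split.
  by rewrite !ler0_norm // ?lerN2 // ltW.
have : g x - g 0 = - (g 0 - g x) by ring.
by rewrite E => ->; ring.
Qed.

Lemma pb_int g dg : (forall y, is_derive y (1:R) g (dg y)) -> pb dg -> pb g.
Proof.
move=> D /pb_norm[C [n [C0 H]]].
exists (`|g 0| + C), n.+1 => x.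
have [c [cx E]] := mvt0 x D.
have Pc : PP c ^+ n <= PP x ^+ n.
  apply: powmono; first exact/ltW/PP_gt0.
  rewrite /PP lerD2l -[c ^+ 2]sqr_normr -[x ^+ 2]sqr_normr.
  by apply: powmono => //; exact: normr_ge0.
have gx : g x = g 0 + dg c * x by rewrite -E; ring.
rewrite gx; apply: le_trans (ler_normD _ _) _; rewrite normrM.
have h1 : `|dg c| * `|x| <= C * PP x ^+ n * PP x.
  apply: ler_pM; [exact: normr_ge0 | exact: normr_ge0 | | exact: norm_le_PP].
  by apply: le_trans (H c) _; apply: ler_wpM2l.
have h2 := PPX_ge1 x n.+1.
rewrite exprSr; have h3 := PPX_ge0 x n; have h4 := normr_ge0 (g 0).
have : `|g 0| <= `|g 0| * (PP x ^+ n * PP x) by rewrite -exprSr ler_peMr.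
lra.
Qed.

End PB.


Section Main.
Local Open Scope classical_set_scope.
Local Open Scope ring_scope.
Variable R : realType.
Set Implicit Arguments. Unset Strict Implicit.
Variables (f H : R -> R) (mu alpha M beta : R).
Hypotheses (fpos : forall x, 0 < f x) (Cf : Cn 4 f) (uni : unimodal_at f mu)
  (fH : forall x, f x = expR (- H x)) (a0 : 0 < alpha)
  (rv : regularly_varying H alpha) (M0 : 0 < M)
  (hM : forall x, `|derive1n 4 (hfun f) x| < M) (b0 : 0 < beta).

Let h : R -> R := hfun f.
Let h1 : R -> R := derive1 h.
Let h2 : R -> R := derive1 h1.
Let h3 : R -> R := derive1 h2.

Lemma hE x : h x = - H x.
Proof. by rewrite /h /hfun fH expRK. Qed.

Let Sh : Sm 4 h := Sm_ln fpos Cf.1.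

Lemma isd (g : R -> R) : (forall x, derivable g x 1) ->
  forall x, is_derive x (1:R) g (derive1 g x).
Proof. by move=> d x; rewrite derive1E; apply: derivableP. Qed.

Let dh : forall x, derivable h x 1. Proof. by have /Sm_succ[] := Sh. Qed.
Let Sh1 : Sm 3 h1. Proof. by have /Sm_succ[] := Sh. Qed.
Let dh1 : forall x, derivable h1 x 1. Proof. by have /Sm_succ[] := Sh1. Qed.
Let Sh2 : Sm 2 h2. Proof. by have /Sm_succ[] := Sh1. Qed.
Let dh2 : forall x, derivable h2 x 1. Proof. by have /Sm_succ[] := Sh2. Qed.
Let Sh3 : Sm 1 h3. Proof. by have /Sm_succ[] := Sh2. Qed.
Let dh3 : forall x, derivable h3 x 1. Proof. by have /Sm_succ[] := Sh3. Qed.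

Lemma S1h : Sm 1 h. Proof. exact: Sm_weak (Sm_weak (Sm_weak Sh)). Qed.
Lemma S1h1 : Sm 1 h1. Proof. exact: Sm_weak (Sm_weak Sh1). Qed.
Lemma S1h2 : Sm 1 h2. Proof. exact: Sm_weak Sh2. Qed.

Lemma pbh3 : pb h3.
Proof.
apply: (pb_int (isd dh3)); exists M, 0%N => x; rewrite expr0 mulr1.
exact: ltW (hM x).
Qed.
Lemma pbh2 : pb h2. Proof. exact: pb_int (isd dh2) pbh3. Qed.
Lemma pbh1 : pb h1. Proof. exact: pb_int (isd dh1) pbh2. Qed.
Lemma pbh : pb h. Proof. exact: pb_int (isd dh) pbh1. Qed.

Lemma fle x y : f y <= f x -> H x <= H y.
Proof. by rewrite !fH ler_expR lerN2. Qed.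

Lemma lbH x : H mu <= H x.
Proof.
have [xm|xm] := lerP x mu.
  exact/fle/(uni.1 x mu xm).
exact/fle/(uni.2 mu x (lexx _) (ltW xm)).
Qed.

Lemma monoR x y : mu <= x -> x <= y -> H x <= H y.
Proof. by move=> mx xy; apply/fle/(uni.2 x y mx xy). Qed.

Lemma monoL x y : x <= y -> y <= mu -> H y <= H x.
Proof. by move=> xy ym; apply/fle/(uni.1 x y xy ym). Qed.

Let rho := (1 + 2 `^ alpha) / 2.
Lemma rho_gt1 : 1 < rho.
Proof.
have : 1 < 2 `^ alpha.
  rewrite /powR (_ : (2:R) == 0 = false) ?gt_eqF // expR_gt1 mulr_gt0 // ln_gt0 //.
  by rewrite ltr1n.
rewrite /rho; lra.
Qed.
Lemma rho_lt : rho < 2 `^ alpha.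
Proof. have := rho_gt1; rewrite /rho; lra. Qed.

Lemma ratioR : exists T1, forall t, T1 < t -> rho < H (t * 2) / H t.
Proof.
have := cvgr_gt _ (rv (ltr0Sn R 1)).1 _ rho_lt.
by case=> T1 [_ HT1]; exists T1 => t tT; apply: HT1.
Qed.

Lemma ratioL : exists T1, forall t, T1 < t -> rho < H (- t * 2) / H (- t).
Proof.
have := (rv (ltr0Sn R 1)).2; rewrite cvgNy_compNP => c.
have := cvgr_gt _ c _ rho_lt.
by case=> T1 [_ HT1]; exists T1 => t tT; apply: HT1.
Qed.

Lemma ratioL2 : exists T1, forall t, T1 < t -> rho < H (- (t * 2)) / H (- t).
Proof. by have [T1 HT] := ratioL; exists T1 => t tT; rewrite -mulNr; exact: HT. Qed.

Lemma monoL2 x y : - mu <= x -> x <= y -> H (- x) <= H (- y).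
Proof. by move=> mx xy; apply: monoL; [rewrite lerN2 | rewrite lerNl]. Qed.

Let W x := expR (beta * h x).

Lemma growth n : exists K, forall x, PP x ^+ n * W x <= K.
Proof.
have [K1 [T1 [T10 H1]]] := tail n rho_gt1 b0 monoR lbH ratioR.
have [K2 [T2 [T20 H2]]] := @tail R (fun t => H (- t)) (- mu) (H mu) rho beta n rho_gt1 b0
  monoL2 (fun x => lbH (- x))
  ratioL2.
pose T := Num.max T1 T2.
exists (Num.max K1 (Num.max K2 (PP T ^+ n * expR (- (beta * H mu))))) => x.
rewrite /W hE mulrN /PP.
have [xT1|xT1] := lerP T1 x.
  by rewrite !le_max H1.
have [xT2|xT2] := lerP x (- T2).
  have := H2 (- x); rewrite opprK sqrrN => HH.
  have xx : T2 <= - x :> R by rewrite lerNr.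
  rewrite !le_max; apply/orP; right; apply/orP; left; exact: HH xx.
rewrite !le_max; apply/orP; right; apply/orP; right.
apply: ler_pM.
- exact: (PPX_ge0 x n).
- exact: expR_ge0.
- apply: powmono; first exact: (ltW (PP_gt0 x)).
  rewrite /PP lerD2l.
  have T1T : T1 <= T by rewrite le_max lexx.
  have T2T : T2 <= T by rewrite le_max lexx orbT.
  nra.
- by rewrite ler_expR lerN2; apply: ler_wpM2l; [exact: ltW | exact: lbH].
Qed.

Lemma W_gt0 x : 0 < W x. Proof. exact: expR_gt0. Qed.

Lemma SW : Sm 1 W.
Proof. apply: (Sm_exp (g := fun x => beta * h x)); apply: Sm_mul; [exact: Sm_cst | exact: S1h]. Qed.

Lemma bound_qf g : pb g -> exists K, forall x, `|g x * W x| <= K * qf x.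
Proof.
move=> /pb_norm[C [n [C0 Hg]]].
have [K HK] := growth n.+1.
exists (C * K) => x.
rewrite normrM (ger0_norm (ltW (W_gt0 x))).
have P0 := PP_gt0 x.
have e : qf x = (PP x)^-1 by [].
have a : PP x ^+ n * W x <= K * qf x.
  rewrite e ler_pdivlMr // mulrAC -exprSr; exact: HK.
apply: le_trans (ler_wpM2r (ltW (W_gt0 x)) (Hg x)) _.
rewrite -mulrA -mulrA; apply: ler_wpM2l => //.
Qed.

Local Notation leb := (@lebesgue_measure R).

Lemma intg g : Sm 1 g -> pb g -> leb.-integrable setT (EFin \o (fun x => g x * W x)).
Proof.
move=> Sg pg.
have [K HK] := bound_qf pg.
apply: (@le_integrable _ _ _ leb setT measurableT _ (EFin \o (fun x => K * qf x))) => //.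
- apply/measurable_EFinP; apply: continuous_measurable_fun.
  apply: Sm_cont; exact: Sm_mul Sg SW.
- move=> x _ /=; rewrite lee_fin; apply: le_trans (HK x) (ler_norm _).
- have -> : (EFin \o (fun x => K * qf x)) = (fun x => K%:E * (EFin \o @qf R) x)%E by apply/funext.
  exact: (integrableZl measurableT K (@intq R)).
Qed.

Lemma Wpow x : f x `^ beta = W x.
Proof. by rewrite /powR gt_eqF // /W /h /hfun. Qed.

Definition J (g : R -> R) := \int[leb]_x (g x * W x).

Lemma IE g : Rintegral leb setT (fun x => g x * f x `^ beta) = J g.
Proof. by apply: eq_Rintegral => x _; rewrite Wpow. Qed.

Definition good (g : R -> R) := Sm 1 g /\ pb g.

Lemma Jadd g1 g2 : good g1 -> good g2 ->
  J (fun x => g1 x + g2 x) = J g1 + J g2.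
Proof.
move=> [S1 p1] [S2 p2]; rewrite /J -RintegralD //.
- by apply: eq_Rintegral => x _; rewrite mulrDl.
- exact: intg.
- exact: intg.
Qed.

Lemma JZ c g : good g -> J (fun x => c * g x) = c * J g.
Proof.
move=> [S1 p1]; rewrite /J -RintegralZl //; last exact: intg.
by apply: eq_Rintegral => x _; rewrite mulrA.
Qed.

Lemma J_ext g1 g2 : g1 =1 g2 -> J g1 = J g2.
Proof. by move=> e; apply: eq_Rintegral => x _; rewrite e. Qed.

Lemma good_add g1 g2 : good g1 -> good g2 -> good (fun x => g1 x + g2 x).
Proof. by move=> [? ?] [? ?]; split; [exact: Sm_add | exact: pb_add]. Qed.
Lemma good_mul g1 g2 : good g1 -> good g2 -> good (fun x => g1 x * g2 x).
Proof. by move=> [? ?] [? ?]; split; [exact: Sm_mul | exact: pb_mul]. Qed.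
Lemma good_cst c : good (fun _ => c).
Proof. by split; [exact: Sm_cst | exact: pb_cst]. Qed.
Lemma good_lin c : good (fun x => x - c).
Proof. split; [apply: Sm_add; [exact: Sm_id | exact: Sm_cst] | exact: pb_lin]. Qed.
Lemma good_ext g1 g2 : g1 =1 g2 -> good g1 -> good g2.
Proof. by move=> e [? ?]; split; [exact: Sm_ext e _ | exact: pb_ext e _]. Qed.
Lemma good_h : good h. Proof. by split; [exact: S1h | exact: pbh]. Qed.
Lemma good_h1 : good h1. Proof. by split; [exact: S1h1 | exact: pbh1]. Qed.
Lemma good_h2 : good h2. Proof. by split; [exact: S1h2 | exact: pbh2]. Qed.

Lemma dW x : is_derive x (1:R) W (beta * h1 x * W x).
Proof.
have Dbh : is_derive x (1:R) (fun x => beta * h x) (beta * h1 x).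
  exact: (is_deriveZ beta (isd dh x)).
have := @is_derive1_comp R (@expR R) (fun x => beta * h x) x _ _ (is_derive_expR _) Dbh.
by rewrite mulrC.
Qed.

Lemma ibpW phi dphi : (forall x, is_derive x (1:R) phi (dphi x)) -> good phi -> good dphi ->
  J (fun x => dphi x + beta * (phi x * h1 x)) = 0.
Proof.
move=> D gp gd.
have gg : good (fun x => dphi x + beta * (phi x * h1 x)).
  by apply: good_add gd _; apply: good_mul (good_cst _) _; apply: good_mul gp good_h1.
have [K HK] := bound_qf gp.2.
rewrite /J; apply: (@ibp0 R (fun x => phi x * W x) _ K).
- move=> x; apply: is_derive_eq.
    exact: (is_deriveM (D x) (dW x)).
  by rewrite /GRing.scale /=; ring.
- by apply: Sm_cont; apply: Sm_mul gg.1 SW.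
- exact: intg gg.1 gg.2.
- exact: HK.
Qed.

Let Z := J (fun _ => 1).

Lemma Eb_J g : Eb f beta g = J g / Z.
Proof.
rewrite /Eb IE; congr (_ / _); rewrite /Zb /Z /J.
by apply: eq_Rintegral => x _; rewrite Wpow mul1r.
Qed.

Lemma Zb_Z : Zb f beta = Z.
Proof. by rewrite /Zb /Z /J; apply: eq_Rintegral => x _; rewrite Wpow mul1r. Qed.

Lemma Cov g1 g2 : good g1 -> good g2 -> Z != 0 ->
  Covb f beta g1 g2 = J (fun x => g1 x * g2 x) / Z - (J g1 / Z) * (J g2 / Z).
Proof.
move=> G1 G2 Z0; rewrite /Covb !Eb_J.
set a := J g1 / Z; set b := J g2 / Z.
have -> : J (fun x => (g1 x - a) * (g2 x - b)) =
    J (fun x => g1 x * g2 x) + (- b) * J g1 + (- a) * J g2 + (a * b) * Z.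
  rewrite (@J_ext _ (fun x => ((g1 x * g2 x + (-b) * g1 x) + (-a) * g2 x) + (a*b) * 1)); last by move=> x; ring.
  have gA := good_mul G1 G2.
  have gB := good_mul (good_cst (-b)) G1.
  have gC := good_mul (good_cst (-a)) G2.
  have gD := good_mul (good_cst (a * b)) (good_cst 1).
  rewrite Jadd; [| exact: good_add (good_add gA gB) gC | exact: gD].
  rewrite Jadd; [| exact: good_add gA gB | exact: gC].
  rewrite Jadd //.
  by rewrite !JZ //; exact: good_cst.
by rewrite /a /b; field.
Qed.

Let k := kfun f mu.
Let r := rfun f mu.

Lemma good_k : good (kfun f mu).
Proof. by apply: good_ext (good_mul (good_lin mu) good_h1) => x. Qed.

Lemma good_r : good (rfun f mu).
Proof.
apply: good_ext (good_mul (good_mul (good_lin mu) (good_lin mu)) good_h2) => x.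
by rewrite /rfun expr2.
Qed.

Lemma Dlin x : is_derive x (1:R) (fun y => y - mu) 1.
Proof. have := is_deriveB (is_derive_id x (1:R)) (is_derive_cst mu x (1:R)). by rewrite subr0. Qed.

Lemma idA : Z + beta * J (kfun f mu) = 0.
Proof.
have iA := @ibpW (fun x => x - mu) (fun _ => 1) Dlin (good_lin mu) (good_cst 1).
rewrite -iA Jadd; [|exact: good_cst | exact: good_mul (good_cst _) good_k].
by rewrite JZ //; exact: good_k.
Qed.

Lemma idB : J (kfun f mu) + J (hfun f) + beta * J (fun x => hfun f x * kfun f mu x) = 0.
Proof.
have D x : is_derive x (1:R) (fun x => (x - mu) * h x) ((x - mu) * h1 x + h x).
  apply: is_derive_eq; first exact: (is_deriveM (Dlin x) (isd dh x)).
  by rewrite /GRing.scale /= mulr1.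
have iB := @ibpW _ _ D (good_mul (good_lin mu) good_h) (good_add good_k good_h).
rewrite (@J_ext _ (fun x => (kfun f mu x + hfun f x) + beta * (hfun f x * kfun f mu x))) in iB; last first.
  by move=> x /=; rewrite /kfun /h1 /h; ring.
rewrite Jadd in iB; [|exact: good_add good_k good_h | exact: good_mul (good_cst _) (good_mul good_h good_k)].
rewrite Jadd in iB; [|exact: good_k | exact: good_h].
by rewrite JZ in iB; [exact: iB | exact: good_mul good_h good_k].
Qed.

Lemma idC : 2 * J (kfun f mu) + J (rfun f mu) + beta * J (fun x => kfun f mu x * kfun f mu x) = 0.
Proof.
have D x : is_derive x (1:R) (fun x => ((x - mu) * (x - mu)) * h1 x) (2 * kfun f mu x + rfun f mu x).
  apply: is_derive_eq; first exact: (is_deriveM (is_deriveM (Dlin x) (Dlin x)) (isd dh1 x)).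
  rewrite /GRing.scale /= /kfun /rfun /h2 /h1 /h /=.
  change ((x - mu) * (x - mu) * derive1 (derive1 (hfun f)) x + derive1 (hfun f) x * ((x - mu) * 1 + (x - mu) * 1) = 2 * ((x - mu) * derive1 (hfun f) x) + (x - mu) ^+ 2 * derive1 (derive1 (hfun f)) x); ring.
have iC := @ibpW _ _ D (good_mul (good_mul (good_lin mu) (good_lin mu)) good_h1)
  (good_add (good_mul (good_cst 2) good_k) good_r).
rewrite (@J_ext _ (fun x => (2 * kfun f mu x + rfun f mu x) + beta * (kfun f mu x * kfun f mu x))) in iC; last first.
  by move=> x /=; rewrite /kfun /h1 /h; ring.
rewrite Jadd in iC; [|exact: good_add (good_mul (good_cst 2) good_k) good_r | exact: good_mul (good_cst _) (good_mul good_k good_k)].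
rewrite Jadd in iC; [|exact: good_mul (good_cst 2) good_k | exact: good_r].
by rewrite !JZ in iC; [exact: iC | exact: good_mul good_k good_k | exact: good_k].
Qed.

Lemma final ell : ell ^+ 2 * (Vfun f mu beta / 2 - Ifun f beta + Rfun f mu beta / (4 * beta))
    = - ell ^+ 2 * Varb f beta (fun x => hfun f x - kfun f mu x / 2).
Proof.
have [Z0|Z0] := eqVneq Z 0.
  rewrite /Vfun /Ifun /Rfun /Varb /Covb !Eb_J Z0 !invr0 !mulr0; ring.
pose q := fun x => hfun f x - kfun f mu x / 2.
have gq : good q.
  apply: good_ext (good_add good_h (good_mul (good_cst (- 2^-1)) good_k)) => x.
  by rewrite /q /h /=; ring.
have gk := good_k; have gh := good_h; have gr := good_r.
set a := J (hfun f).
set b := J (kfun f mu).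
set c := J (fun x => hfun f x * kfun f mu x).
set d := J (fun x => hfun f x * hfun f x).
set e := J (fun x => kfun f mu x * kfun f mu x).
set g := J (rfun f mu).
have V : Vfun f mu beta = c / Z - (a / Z) * (b / Z) by exact (Cov gh gk Z0).
have I : Ifun f beta = d / Z - (a / Z) * (a / Z) by exact (Cov gh gh Z0).
have Rr : Rfun f mu beta = (g - b) / Z.
  rewrite /Rfun Eb_J; congr (_ / _).
  rewrite (@J_ext _ (fun x => rfun f mu x + (-1) * kfun f mu x)); last by move=> x /=; ring.
  rewrite Jadd //; last exact: good_mul (good_cst _) gk.
  by rewrite JZ // mulN1r.
have E1 : J (fun x => q x * q x) = d - c + e / 4.
  rewrite (@J_ext _ (fun x => (hfun f x * hfun f x + (-1) * (hfun f x * kfun f mu x))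
      + 4^-1 * (kfun f mu x * kfun f mu x))); last by move=> x /=; rewrite /q; field.
  rewrite Jadd; [| exact: good_add (good_mul gh gh) (good_mul (good_cst _) (good_mul gh gk))
     | exact: good_mul (good_cst _) (good_mul gk gk)].
  rewrite Jadd; [| exact (good_mul gh gh) | exact: good_mul (good_cst _) (good_mul gh gk)].
  rewrite !JZ; [| exact (good_mul gk gk) | exact: good_mul gh gk].
  by rewrite -/d -/c -/e; ring.
have E2 : J q = a - b / 2.
  rewrite (@J_ext _ (fun x => hfun f x + (- 2^-1) * kfun f mu x)); last by move=> x /=; rewrite /q; ring.
  rewrite Jadd //; last exact: good_mul (good_cst _) gk.
  by rewrite JZ // -/a -/b; ring.
have Va : Varb f beta q = (d - c + e / 4) / Z - ((a - b / 2) / Z) * ((a - b / 2) / Z).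
  by rewrite /Varb (Cov gq gq Z0) E1 E2.
rewrite -/q V I Rr Va.
have iA := idA; have iB := idB; have iC := idC.
rewrite -/b in iA; rewrite -/a -/b -/c in iB; rewrite -/b -/g -/e in iC.
have bn : beta != 0 by rewrite gt_eqF.
have hb : beta * b = - Z by apply/eqP; rewrite -subr_eq0 -iA; apply/eqP; ring.
have hc : beta * c = - (a + b) by apply/eqP; rewrite -subr_eq0 -iB; apply/eqP; ring.
have gE : g = - 2 * b - beta * e by apply/eqP; rewrite -subr_eq0 -iC; apply/eqP; ring.
have bE : b = - Z / beta by rewrite -hb; field.
have cE : c = - (a + b) / beta by rewrite -hc; field.
rewrite gE cE bE.
by field; rewrite Z0 bn.
Qed.


End Main.

Theorem proposition4 (R : realType) (f H : R -> R) (mu alpha M : R) :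
  (forall x, 0 < f x) ->
  Cn 4 f ->
  unimodal_at f mu ->
  (forall x, f x = expR (- H x)) ->
  0 < alpha -> regularly_varying H alpha ->
  0 < M -> (forall x, `|derive1n 4 (hfun f) x| < M) ->
  forall beta ell : R, 0 < beta -> 0 < ell ->
    ell ^+ 2 * (Vfun f mu beta / 2 - Ifun f beta + Rfun f mu beta / (4 * beta))
    = - ell ^+ 2 * Varb f beta (fun x => hfun f x - kfun f mu x / 2).
Proof.
move=> fpos Cf uni fH a0 rv M0 hM beta ell b0 l0.
exact: (final fpos Cf uni fH a0 rv hM b0 ell).
Qed.
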